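(* Let $v:\mathbb{C}\rightarrow\mathbb{R}$ be a solution of $v_{z\bar z}+\frac12\sinh(2v)=0$, and let $\phi_t:(\mathbb{C},e^{2v}|dz|^2)\rightarrow\mathbb{S}^3$, $t\in\mathbb{R}$, be a $1$-parameter family of isometric minimal immersions with Hopf differentials $\Theta_{\phi_t}=\frac{i}{2}e^{it}dz\otimes dz$. Then for each $t$ the map \[ \Phi_t(z)=\bigl(\nu^+_{\phi_t}(z),\,2\,\mathrm{Im}(ze^{it/2})\bigr) \] is an isometric minimal immersion $(\mathbb{C},4\cosh^2v\,|dz|^2)\rightarrow\mathbb{S}^2_+\times\mathbb{R}$ with Hopf differential $e^{it}dz\otimes dz$; i.e., $\{\Phi_t\}$ is the $1$-parameter family of isometric minimal immersions of $(\mathbb{C},4\cosh^2v|dz|^2)$ into $\mathbb{S}^2\times\mathbb{R}$ with Hopf differentials $e^{it}dz\otimes dz$.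
   Context: For a conformal minimal immersion $\phi:\Sigma\to\mathbb{S}^3\subset\mathbb{R}^4$ with conformal parameter $z=x+iy$, $N$ is the unit normal in $\mathbb{S}^3$ with $\{\phi_x,\phi_y,\phi,N\}$ positively oriented in $\mathbb{R}^4$; its Hopf differential is $\Theta_\phi=\langle\phi_z,N_z\rangle dz\otimes dz$ ($\langle\cdot,\cdot\rangle$ complex-bilinear, $\partial_z=\frac12(\partial_x-i\partial_y)$). $\Lambda^2\mathbb{R}^4$ has the inner product $\langle v\wedge w,v'\wedge w'\rangle=\langle v,v'\rangle\langle w,w'\rangle-\langle v,w'\rangle\langle w,v'\rangle$; $\Lambda^2_+\mathbb{R}^4$ is the $+1$ eigenspace of the Hodge star, $\mathbb{S}^2_+$ its unit sphere (an isometric copy of $\mathbb{S}^2$), and $\nu^+_\phi(p)=\frac1{\sqrt2}(e_1\wedge e_2+\phi(p)\wedge N_p)$ for an oriented orthonormal basis $\{e_1,e_2\}$ of $d\phi(T_p\Sigma)$. For a conformal immersion $\Phi=(\Phi_1,\Phi_2)$ into $\mathbb{S}^2\times\mathbb{R}$, its Hopf differential is $\langle(\Phi_1)_z,(\Phi_1)_z\rangle dz\otimes dz$. *)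

(* Defs.v *)
From Stdlib Require Import Reals.
From Coquelicot Require Import Coquelicot.
Open Scope R_scope.

(* Vectors of R^n are represented as functions nat -> R; only the
   components 0..n-1 are ever used (all operations take the dimension n). *)
Definition vec := nat -> R.

Fixpoint sumn (n : nat) (f : nat -> R) : R :=
  match n with O => 0 | S m => sumn m f + f m end.

Definition dot (n : nat) (a b : vec) : R := sumn n (fun i => a i * b i).
Definition vnorm (n : nat) (a : vec) : R := sqrt (dot n a a).
Definition scale (c : R) (a : vec) : vec := fun i => c * a i.
Definition vadd (a b : vec) : vec := fun i => a i + b i.

(* Surfaces parametrized by z = x + i y : maps R -> R -> R^n *)
Definition dxs (f : R -> R -> R) (x y : R) : R := Derive (fun s => f s y) x.
Definition dys (f : R -> R -> R) (x y : R) : R := Derive (fun s => f x s) y.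
Definition dx (f : R -> R -> vec) (x y : R) : vec := fun i => dxs (fun a b => f a b i) x y.
Definition dy (f : R -> R -> vec) (x y : R) : vec := fun i => dys (fun a b => f a b i) x y.
Definition lap (f : R -> R -> vec) (x y : R) : vec :=
  vadd (dx (dx f) x y) (dy (dy f) x y).
Definition laps (f : R -> R -> R) (x y : R) : R :=
  dxs (dxs f) x y + dys (dys f) x y.

(* C^infinity: f lies in a class of maps all of whose members are
   continuous with existing partial derivatives, and which is closed under
   taking partial derivatives (so all iterated partials exist and are continuous). *)
Definition smooth (n : nat) (f : R -> R -> vec) : Prop :=
  exists S : (R -> R -> vec) -> Prop, S f /\
    forall g, S g ->
      (forall i x y, (i < n)%nat ->
         continuous (fun p : R * R => g (fst p) (snd p) i) (x, y) /\
         ex_derive (fun s => g s y i) x /\ ex_derive (fun s => g x s i) y)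
      /\ S (dx g) /\ S (dy g).

Definition smooth_scalar (v : R -> R -> R) : Prop := smooth 1 (fun x y _ => v x y).

(* d/dz = (d/dx - i d/dy)/2 of a vector-valued map, as (real part, imaginary part) *)
Definition dz (f : R -> R -> vec) (x y : R) : vec * vec :=
  (scale (/ 2) (dx f x y), scale (- / 2) (dy f x y)).
(* complex-bilinear extension of the Euclidean inner product on R^n *)
Definition cdot (n : nat) (a b : vec * vec) : C :=
  (dot n (fst a) (fst b) - dot n (snd a) (snd b),
   dot n (fst a) (snd b) + dot n (snd a) (fst b)).

(* conformal (isometric) immersion with metric lam |dz|^2 *)
Definition isometric (n : nat) (f : R -> R -> vec) (lam : R -> R -> R) : Prop :=
  forall x y, dot n (dx f x y) (dx f x y) = lam x y /\
              dot n (dy f x y) (dy f x y) = lam x y /\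
              dot n (dx f x y) (dy f x y) = 0.

Definition det3 (a b c : vec) (p q r : nat) : R :=
  a p * (b q * c r - b r * c q) - a q * (b p * c r - b r * c p)
  + a r * (b p * c q - b q * c p).
(* cross4 a b c is the vector with dot 4 (cross4 a b c) d = det(a,b,c,d) *)
Definition cross4 (a b c : vec) : vec := fun i =>
  match i with
  | 0%nat => - det3 a b c 1 2 3
  | 1%nat => det3 a b c 0 2 3
  | 2%nat => - det3 a b c 0 1 3
  | 3%nat => det3 a b c 0 1 2
  | _ => 0
  end.
Definition det4 (a b c d : vec) : R := dot 4 (cross4 a b c) d.

(* unit normal N of phi in S^3 with {phi_x, phi_y, phi, N} positively oriented:
   the normalized generalized cross product of phi_x, phi_y, phi *)
Definition normalS3 (phi : R -> R -> vec) (x y : R) : vec :=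
  let w := cross4 (dx phi x y) (dy phi x y) (phi x y) in scale (/ vnorm 4 w) w.

(* minimal immersion into a submanifold M of Euclidean space, for a conformal
   parametrization: the Laplacian (= 2 lam * mean curvature vector in R^n) is
   orthogonal to T M.  For M = S^3: T_p S^3 = p^perp. *)
Definition minimal_S3 (phi : R -> R -> vec) : Prop :=
  forall x y (w : vec), dot 4 w (phi x y) = 0 -> dot 4 (lap phi x y) w = 0.

Definition isometric_minimal_S3 (phi : R -> R -> vec) (lam : R -> R -> R) : Prop :=
  smooth 4 phi /\ (forall x y, dot 4 (phi x y) (phi x y) = 1) /\
  isometric 4 phi lam /\ minimal_S3 phi.

Definition hopfS3 (phi : R -> R -> vec) (x y : R) : C :=
  cdot 4 (dz phi x y) (dz (normalS3 phi) x y).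

(* ---- Lambda^2 R^4 = R^6, basis e_i^e_j (i<j) in the order
   01, 02, 03, 12, 13, 23.  In these coordinates the inner product
   <v^w,v'^w'> = <v,v'><w,w'> - <v,w'><w,v'> is the standard dot on R^6. *)
Definition wedge (a b : vec) : vec := fun k =>
  match k with
  | 0%nat => a 0%nat * b 1%nat - a 1%nat * b 0%nat
  | 1%nat => a 0%nat * b 2%nat - a 2%nat * b 0%nat
  | 2%nat => a 0%nat * b 3%nat - a 3%nat * b 0%nat
  | 3%nat => a 1%nat * b 2%nat - a 2%nat * b 1%nat
  | 4%nat => a 1%nat * b 3%nat - a 3%nat * b 1%nat
  | 5%nat => a 2%nat * b 3%nat - a 3%nat * b 2%nat
  | _ => 0
  end.

Definition hodge (w : vec) : vec := fun k =>
  match k with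
  | 0%nat => w 5%nat
  | 1%nat => - w 4%nat
  | 2%nat => w 3%nat
  | 3%nat => w 2%nat
  | 4%nat => - w 1%nat
  | 5%nat => w 0%nat
  | _ => 0
  end.
Definition self_dual (w : vec) : Prop := forall k, (k < 6)%nat -> hodge w k = w k.

Definition nu_plus (phi : R -> R -> vec) (x y : R) : vec :=
  let e1 := scale (/ vnorm 4 (dx phi x y)) (dx phi x y) in
  let e2 := scale (/ vnorm 4 (dy phi x y)) (dy phi x y) in
  scale (/ sqrt 2) (vadd (wedge e1 e2) (wedge (phi x y) (normalS3 phi x y))).

(* Phi_t(z) = (nu^+_{phi_t}(z), 2 Im(z e^{it/2})) in Lambda^2 R^4 x R = R^7
   (coordinates 0..5: bivector, coordinate 6: the R factor) *)
Definition PhiMap (t : R) (phi : R -> R -> vec) (x y : R) : vec := fun k =>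
  if (k <? 6)%nat then nu_plus phi x y k
  else if (k =? 6)%nat then 2 * (x * sin (t / 2) + y * cos (t / 2))
  else 0.

(* minimal immersion into S^2_+ x R (subset of Lambda^2 x R = R^7 with the
   product metric): Laplacian orthogonal to T(S^2_+ x R) at Phi(p), which is
   {(w, s) : w in Lambda^2_+, w perp Phi_1(p), s in R}. *)
Definition minimal_S2R (Phi : R -> R -> vec) : Prop :=
  forall x y (w : vec), self_dual w -> dot 6 w (Phi x y) = 0 ->
    dot 7 (lap Phi x y) w = 0.

Definition isometric_minimal_S2R (Phi : R -> R -> vec) (lam : R -> R -> R) : Prop :=
  smooth 7 Phi /\
  (forall x y, self_dual (Phi x y) /\ dot 6 (Phi x y) (Phi x y) = 1) /\
  isometric 7 Phi lam /\ minimal_S2R Phi.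

(* Hopf differential <(Phi_1)_z, (Phi_1)_z> dz^2 (coefficient); Phi_1 = first six coords *)
Definition hopfS2R (Phi : R -> R -> vec) (x y : R) : C :=
  cdot 6 (dz Phi x y) (dz Phi x y).

(* Main.v *)
Require Import Defs.
From Stdlib Require Import Reals.
From Coquelicot Require Import Coquelicot.
From Stdlib Require Import Lra Lia FunctionalExtensionality.
Open Scope R_scope.


Lemma dot4E a b : dot 4 a b = a 0%nat * b 0%nat + a 1%nat * b 1%nat + a 2%nat * b 2%nat + a 3%nat * b 3%nat.
Proof. unfold dot; simpl; ring. Qed.
Lemma dot6E a b : dot 6 a b = a 0%nat * b 0%nat + a 1%nat * b 1%nat + a 2%nat * b 2%nat + a 3%nat * b 3%nat + a 4%nat * b 4%nat + a 5%nat * b 5%nat.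
Proof. unfold dot; simpl; ring. Qed.
Lemma dot7E a b : dot 7 a b = dot 6 a b + a 6%nat * b 6%nat.
Proof. unfold dot; simpl; ring. Qed.

Lemma wedge_dot a b c d : dot 6 (wedge a b) (wedge c d) = dot 4 a c * dot 4 b d - dot 4 a d * dot 4 b c.
Proof. rewrite dot6E, !dot4E; simpl; ring. Qed.

Definition det3m (a11 a12 a13 a21 a22 a23 a31 a32 a33 : R) :=
  a11 * (a22 * a33 - a23 * a32) - a12 * (a21 * a33 - a23 * a31) + a13 * (a21 * a32 - a22 * a31).

Lemma gram a b c d e f : dot 4 (cross4 a b c) (cross4 d e f) =
  det3m (dot 4 a d) (dot 4 a e) (dot 4 a f) (dot 4 b d) (dot 4 b e) (dot 4 b f) (dot 4 c d) (dot 4 c e) (dot 4 c f).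
Proof. rewrite !dot4E; unfold det3m, cross4, det3; simpl; ring. Qed.

Lemma cross_perp1 a b c : dot 4 (cross4 a b c) a = 0.
Proof. rewrite !dot4E; unfold cross4, det3; simpl; ring. Qed.
Lemma cross_perp2 a b c : dot 4 (cross4 a b c) b = 0.
Proof. rewrite !dot4E; unfold cross4, det3; simpl; ring. Qed.
Lemma cross_perp3 a b c : dot 4 (cross4 a b c) c = 0.
Proof. rewrite !dot4E; unfold cross4, det3; simpl; ring. Qed.

Lemma cramer a b c d u i : (i < 4)%nat ->
  dot 4 (cross4 a b c) d * u i = dot 4 (cross4 u b c) d * a i + dot 4 (cross4 a u c) d * b i
   + dot 4 (cross4 a b u) d * c i + dot 4 (cross4 a b c) u * d i.
Proof.
  intro Hi. rewrite !dot4E; unfold cross4, det3; simpl.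
  destruct i as [|[|[|[|i]]]]; [ring|ring|ring|ring|lia].
Qed.

Lemma wedge_cross_hodge a b c k : (k < 6)%nat ->
  wedge c (cross4 a b c) k = dot 4 c c * hodge (wedge a b) k - dot 4 c a * hodge (wedge c b) k
    - dot 4 c b * hodge (wedge a c) k.
Proof.
  intro Hk. rewrite !dot4E; unfold cross4, det3, hodge, wedge; simpl.
  destruct k as [|[|[|[|[|[|k]]]]]]; try ring; lia.
Qed.


Definition C0 (f : R -> R -> R) : Prop := forall x y,
  continuous (fun p : R * R => f (fst p) (snd p)) (x, y) /\
  ex_derive (fun s => f s y) x /\ ex_derive (fun s => f x s) y.

Fixpoint Cn (n : nat) (f : R -> R -> R) : Prop :=
  match n with O => C0 f | S m => C0 f /\ Cn m (dxs f) /\ Cn m (dys f) end.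

Definition Cinf f := forall n, Cn n f.

Lemma Cn_C0 n f : Cn n f -> C0 f.
Proof. destruct n; simpl; tauto. Qed.

Lemma Cn_S n f : Cn (S n) f -> Cn n f.
Proof.
  revert f; induction n; intros f H.
  - exact (proj1 H).
  - destruct H as [H0 [H1 H2]]. simpl. split; [exact H0|split; apply IHn; assumption].
Qed.

Lemma C0_plus f g : C0 f -> C0 g -> C0 (fun x y => f x y + g x y).
Proof.
  intros Hf Hg x y. destruct (Hf x y) as [a [b c]], (Hg x y) as [a' [b' c']].
  split; [|split].
  - apply (continuous_plus (fun p : R*R => f (fst p) (snd p)) (fun p : R*R => g (fst p) (snd p))); assumption.
  - apply (ex_derive_plus (fun s => f s y) (fun s => g s y)); assumption.
  - apply (ex_derive_plus (fun s => f x s) (fun s => g x s)); assumption.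
Qed.

Lemma C0_mult f g : C0 f -> C0 g -> C0 (fun x y => f x y * g x y).
Proof.
  intros Hf Hg x y. destruct (Hf x y) as [a [b c]], (Hg x y) as [a' [b' c']].
  split; [|split].
  - apply (continuous_mult (fun p : R*R => f (fst p) (snd p)) (fun p : R*R => g (fst p) (snd p))); assumption.
  - apply (ex_derive_mult (fun s => f s y) (fun s => g s y)); assumption.
  - apply (ex_derive_mult (fun s => f x s) (fun s => g x s)); assumption.
Qed.

Lemma C0_inv f : C0 f -> (forall x y, f x y <> 0) -> C0 (fun x y => / f x y).
Proof.
  intros Hf Hn x y. destruct (Hf x y) as [a [b c]].
  split; [|split].
  - apply (continuous_comp (fun p : R*R => f (fst p) (snd p)) (fun u => / u)); [assumption|].
    apply continuous_Rinv. apply Hn.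
  - apply (ex_derive_inv (fun s => f s y)); auto.
  - apply (ex_derive_inv (fun s => f x s)); auto.
Qed.

Lemma C0_const c : C0 (fun _ _ => c).
Proof.
  intros x y. split; [|split].
  - apply continuous_const.
  - apply ex_derive_const.
  - apply ex_derive_const.
Qed.

Lemma C0_fst : C0 (fun x _ => x).
Proof.
  intros x y. split; [|split].
  - apply continuous_fst.
  - apply ex_derive_id.
  - apply ex_derive_const.
Qed.

Lemma C0_snd : C0 (fun _ y => y).
Proof.
  intros x y. split; [|split].
  - apply continuous_snd.
  - apply ex_derive_const.
  - apply ex_derive_id.
Qed.

Lemma dxs_plus f g : C0 f -> C0 g ->
  dxs (fun x y => f x y + g x y) = (fun x y => dxs f x y + dxs g x y).
Proof.
  intros Hf Hg. apply functional_extensionality; intro x; apply functional_extensionality; intro y.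
  unfold dxs. destruct (Hf x y) as [_ [A _]]. destruct (Hg x y) as [_ [B _]].
  exact (Derive_plus (fun s => f s y) (fun s => g s y) x A B).
Qed.
Lemma dys_plus f g : C0 f -> C0 g ->
  dys (fun x y => f x y + g x y) = (fun x y => dys f x y + dys g x y).
Proof.
  intros Hf Hg. apply functional_extensionality; intro x; apply functional_extensionality; intro y.
  unfold dys. destruct (Hf x y) as [_ [_ A]]. destruct (Hg x y) as [_ [_ B]].
  exact (Derive_plus (fun s => f x s) (fun s => g x s) y A B).
Qed.
Lemma dxs_mult f g : C0 f -> C0 g ->
  dxs (fun x y => f x y * g x y) = (fun x y => dxs f x y * g x y + f x y * dxs g x y).
Proof.
  intros Hf Hg. apply functional_extensionality; intro x; apply functional_extensionality; intro y.
  unfold dxs. destruct (Hf x y) as [_ [A _]]. destruct (Hg x y) as [_ [B _]].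
  exact (Derive_mult (fun s => f s y) (fun s => g s y) x A B).
Qed.
Lemma dys_mult f g : C0 f -> C0 g ->
  dys (fun x y => f x y * g x y) = (fun x y => dys f x y * g x y + f x y * dys g x y).
Proof.
  intros Hf Hg. apply functional_extensionality; intro x; apply functional_extensionality; intro y.
  unfold dys. destruct (Hf x y) as [_ [_ A]]. destruct (Hg x y) as [_ [_ B]].
  exact (Derive_mult (fun s => f x s) (fun s => g x s) y A B).
Qed.
Lemma dxs_inv f : C0 f -> (forall x y, f x y <> 0) ->
  dxs (fun x y => / f x y) = (fun x y => (-1) * dxs f x y * (/ f x y * / f x y)).
Proof.
  intros Hf Hn. apply functional_extensionality; intro x; apply functional_extensionality; intro y.
  unfold dxs. destruct (Hf x y) as [_ [A _]].
  rewrite (Derive_inv (fun s => f s y) x A (Hn x y)).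
  field. apply Hn.
Qed.
Lemma dys_inv f : C0 f -> (forall x y, f x y <> 0) ->
  dys (fun x y => / f x y) = (fun x y => (-1) * dys f x y * (/ f x y * / f x y)).
Proof.
  intros Hf Hn. apply functional_extensionality; intro x; apply functional_extensionality; intro y.
  unfold dys. destruct (Hf x y) as [_ [_ A]].
  rewrite (Derive_inv (fun s => f x s) y A (Hn x y)).
  field. apply Hn.
Qed.
Lemma dxs_const c : dxs (fun _ _ => c) = (fun _ _ => 0).
Proof.
  apply functional_extensionality; intro x; apply functional_extensionality; intro y.
  unfold dxs. apply Derive_const.
Qed.
Lemma dys_const c : dys (fun _ _ => c) = (fun _ _ => 0).
Proof.
  apply functional_extensionality; intro x; apply functional_extensionality; intro y.
  unfold dys. apply Derive_const.
Qed.

Lemma Cn_const n c : Cn n (fun _ _ => c).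
Proof.
  revert c; induction n; intro c; simpl. apply C0_const.
  rewrite dxs_const, dys_const. split; [apply C0_const|split; apply IHn].
Qed.

Lemma Cn_plus n : forall f g, Cn n f -> Cn n g -> Cn n (fun x y => f x y + g x y).
Proof.
  induction n; intros f g Hf Hg; simpl.
  - apply C0_plus; assumption.
  - destruct Hf as [F0 [F1 F2]], Hg as [G0 [G1 G2]].
    rewrite dxs_plus, dys_plus by assumption.
    split; [apply C0_plus; assumption|split; apply IHn; assumption].
Qed.

Lemma Cn_mult n : forall f g, Cn n f -> Cn n g -> Cn n (fun x y => f x y * g x y).
Proof.
  induction n; intros f g Hf Hg; simpl.
  - apply C0_mult; assumption.
  - pose proof (Cn_S _ _ Hf) as Hf'. pose proof (Cn_S _ _ Hg) as Hg'.
    destruct Hf as [F0 [F1 F2]], Hg as [G0 [G1 G2]].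
    rewrite dxs_mult, dys_mult by assumption.
    split; [apply C0_mult; assumption|split; apply Cn_plus; apply IHn; assumption].
Qed.

Lemma Cn_inv n : forall f, (forall x y, f x y <> 0) -> Cn n f -> Cn n (fun x y => / f x y).
Proof.
  induction n; intros f Hn Hf; simpl.
  - apply C0_inv; assumption.
  - pose proof (Cn_S _ _ Hf) as Hf'. destruct Hf as [F0 [F1 F2]].
    rewrite dxs_inv, dys_inv by assumption.
    split; [apply C0_inv; assumption|].
    split; apply Cn_mult; try (apply Cn_mult; [apply Cn_const|assumption]);
      apply Cn_mult; apply IHn; assumption.
Qed.

Lemma Cn_fst n : Cn n (fun x _ => x).
Proof.
  destruct n; simpl. apply C0_fst.
  replace (dxs (fun x _ => x)) with (fun _ _ : R => 1).
  replace (dys (fun x _ => x)) with (fun _ _ : R => 0).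
  split; [apply C0_fst|split; apply Cn_const].
  - apply functional_extensionality; intro x; apply functional_extensionality; intro y.
    unfold dys. symmetry; apply Derive_const.
  - apply functional_extensionality; intro x; apply functional_extensionality; intro y.
    unfold dxs. symmetry; apply Derive_id.
Qed.
Lemma Cn_snd n : Cn n (fun _ y => y).
Proof.
  destruct n; simpl. apply C0_snd.
  replace (dys (fun _ y => y)) with (fun _ _ : R => 1).
  replace (dxs (fun _ y => y)) with (fun _ _ : R => 0).
  split; [apply C0_snd|split; apply Cn_const].
  - apply functional_extensionality; intro x; apply functional_extensionality; intro y.
    unfold dxs. symmetry; apply Derive_const.
  - apply functional_extensionality; intro x; apply functional_extensionality; intro y.
    unfold dys. symmetry; apply Derive_id.
Qed.

Lemma Cinf_plus f g : Cinf f -> Cinf g -> Cinf (fun x y => f x y + g x y).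
Proof. intros F G n; apply Cn_plus; auto. Qed.
Lemma Cinf_mult f g : Cinf f -> Cinf g -> Cinf (fun x y => f x y * g x y).
Proof. intros F G n; apply Cn_mult; auto. Qed.
Lemma Cinf_inv f : (forall x y, f x y <> 0) -> Cinf f -> Cinf (fun x y => / f x y).
Proof. intros H F n; apply Cn_inv; auto. Qed.
Lemma Cinf_const c : Cinf (fun _ _ => c).
Proof. intro n; apply Cn_const. Qed.
Lemma Cinf_fst : Cinf (fun x _ => x).
Proof. intro n; apply Cn_fst. Qed.
Lemma Cinf_snd : Cinf (fun _ y => y).
Proof. intro n; apply Cn_snd. Qed.
Lemma Cinf_dxs f : Cinf f -> Cinf (dxs f).
Proof. intros F n. exact (proj1 (proj2 (F (S n)))). Qed.
Lemma Cinf_dys f : Cinf f -> Cinf (dys f).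
Proof. intros F n. exact (proj2 (proj2 (F (S n)))). Qed.
Lemma Cinf_C0 f : Cinf f -> C0 f.
Proof. intro F; exact (F O). Qed.
Lemma Cinf_minus f g : Cinf f -> Cinf g -> Cinf (fun x y => f x y - g x y).
Proof.
  intros F G. unfold Rminus. 
  replace (fun x y => f x y + - g x y) with (fun x y => f x y + (-1) * g x y).
  apply Cinf_plus; auto. apply Cinf_mult; auto. apply Cinf_const.
  apply functional_extensionality; intro x; apply functional_extensionality; intro y. ring.
Qed.

Definition vCinf (n : nat) (f : R -> R -> vec) := forall i, (i < n)%nat -> Cinf (fun x y => f x y i).

Lemma smooth_of_vCinf n f : vCinf n f -> smooth n f.
Proof.
  intro H. exists (vCinf n). split; [exact H|].
  intros g Hg. split; [|split].
  - intros i x y Hi. destruct (Cinf_C0 _ (Hg i Hi) x y) as [a [b c]]. auto.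
  - intros i Hi. apply (Cinf_dxs (fun a b => g a b i)). auto.
  - intros i Hi. apply (Cinf_dys (fun a b => g a b i)). auto.
Qed.

Lemma vCinf_of_smooth n f : smooth n f -> vCinf n f.
Proof.
  intros [S [Sf HS]].
  assert (forall m g, S g -> forall i, (i < n)%nat -> Cn m (fun x y => g x y i)).
  { induction m; intros g Sg i Hi.
    - intros x y. destruct (HS g Sg) as [H _]. apply H; auto.
    - simpl. split.
      + intros x y. destruct (HS g Sg) as [H _]. apply H; auto.
      + destruct (HS g Sg) as [_ [H1 H2]]. split.
        * apply (IHm (dx g) H1 i Hi).
        * apply (IHm (dy g) H2 i Hi). }
  intros i Hi m. apply H; auto.
Qed.


Lemma Cinf_opp f : Cinf f -> Cinf (fun x y => - f x y).
Proof.
  intro F. replace (fun x y => - f x y) with (fun x y => (-1) * f x y).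
  apply Cinf_mult; auto. apply Cinf_const.
  apply functional_extensionality; intro x; apply functional_extensionality; intro y. ring.
Qed.

Ltac cinf := repeat first [ assumption | apply Cinf_plus | apply Cinf_minus | apply Cinf_mult
   | apply Cinf_opp | apply Cinf_const ].

Lemma vCinf_wedge A B : vCinf 4 A -> vCinf 4 B -> forall k, Cinf (fun x y => wedge (A x y) (B x y) k).
Proof.
  intros HA HB k.
  pose proof (HA 0%nat ltac:(lia)). pose proof (HA 1%nat ltac:(lia)).
  pose proof (HA 2%nat ltac:(lia)). pose proof (HA 3%nat ltac:(lia)).
  pose proof (HB 0%nat ltac:(lia)). pose proof (HB 1%nat ltac:(lia)).
  pose proof (HB 2%nat ltac:(lia)). pose proof (HB 3%nat ltac:(lia)).
  destruct k as [|[|[|[|[|[|k]]]]]]; unfold wedge; cinf.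
Qed.

Lemma vCinf_cross A B C : vCinf 4 A -> vCinf 4 B -> vCinf 4 C -> forall k, Cinf (fun x y => cross4 (A x y) (B x y) (C x y) k).
Proof.
  intros HA HB HC k.
  pose proof (HA 0%nat ltac:(lia)). pose proof (HA 1%nat ltac:(lia)).
  pose proof (HA 2%nat ltac:(lia)). pose proof (HA 3%nat ltac:(lia)).
  pose proof (HB 0%nat ltac:(lia)). pose proof (HB 1%nat ltac:(lia)).
  pose proof (HB 2%nat ltac:(lia)). pose proof (HB 3%nat ltac:(lia)).
  pose proof (HC 0%nat ltac:(lia)). pose proof (HC 1%nat ltac:(lia)).
  pose proof (HC 2%nat ltac:(lia)). pose proof (HC 3%nat ltac:(lia)).
  destruct k as [|[|[|[|k]]]]; unfold cross4, det3; cinf.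
Qed.

Lemma Cinf_dot n A B : vCinf n A -> vCinf n B -> Cinf (fun x y => dot n (A x y) (B x y)).
Proof.
  induction n; intros HA HB.
  - unfold dot; simpl. apply Cinf_const.
  - unfold dot; simpl. apply Cinf_plus.
    + apply IHn; intros i Hi; [apply HA|apply HB]; lia.
    + apply Cinf_mult; [apply HA|apply HB]; lia.
Qed.

Lemma Cinf_exx f x y : Cinf f -> ex_derive (fun s => f s y) x.
Proof. intro F. destruct (Cinf_C0 f F x y) as [_ [H _]]. exact H. Qed.
Lemma Cinf_exy f x y : Cinf f -> ex_derive (fun s => f x s) y.
Proof. intro F. destruct (Cinf_C0 f F x y) as [_ [_ H]]. exact H. Qed.

Definition dvec (F : R -> vec) (s : R) : vec := fun i => Derive (fun u => F u i) s.
Definition exv (n : nat) (F : R -> vec) (s : R) := forall i, (i < n)%nat -> ex_derive (fun u => F u i) s.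

Lemma isd_mult f g s df dg : is_derive f s df -> is_derive g s dg ->
  is_derive (fun u => f u * g u) s (df * g s + f s * dg).
Proof. intros A B. apply (is_derive_mult f g s df dg A B). intros; apply Rmult_comm. Qed.
Lemma isd_plus f g s df dg : is_derive f s df -> is_derive g s dg ->
  is_derive (fun u => f u + g u) s (df + dg).
Proof. intros A B. apply (is_derive_plus f g s df dg A B). Qed.

Lemma isd_dot n F G s : exv n F s -> exv n G s ->
  is_derive (fun u => dot n (F u) (G u)) s (dot n (dvec F s) (G s) + dot n (F s) (dvec G s)).
Proof.
  induction n; intros HF HG.
  - unfold dot; simpl. replace (0 + 0) with 0 by ring.
    exact (@is_derive_const R_AbsRing R_NormedModule 0 s).
  - unfold dot; simpl.
    replace (sumn n (fun i => dvec F s i * G s i) + dvec F s n * G s n +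
      (sumn n (fun i => F s i * dvec G s i) + F s n * dvec G s n))
    with ((dot n (dvec F s) (G s) + dot n (F s) (dvec G s)) + (dvec F s n * G s n + F s n * dvec G s n))
    by (unfold dot; ring).
    apply (isd_plus (fun u => sumn n (fun i => F u i * G u i)) (fun u => F u n * G u n)).
    + apply IHn; intros i Hi; [apply (HF i)|apply (HG i)]; lia.
    + unfold dvec. apply isd_mult; apply Derive_correct; [apply (HF n)|apply (HG n)]; lia.
Qed.

Lemma Derive_dot n F G s : exv n F s -> exv n G s ->
  Derive (fun u => dot n (F u) (G u)) s = dot n (dvec F s) (G s) + dot n (F s) (dvec G s).
Proof. intros; apply is_derive_unique, isd_dot; auto. Qed.

Lemma Derive_wedge A B s : exv 4 A s -> exv 4 B s -> forall k,
  Derive (fun u => wedge (A u) (B u) k) s = wedge (dvec A s) (B s) k + wedge (A s) (dvec B s) k.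
Proof.
  intros HA HB k.
  pose proof (HA 0%nat ltac:(lia)). pose proof (HA 1%nat ltac:(lia)).
  pose proof (HA 2%nat ltac:(lia)). pose proof (HA 3%nat ltac:(lia)).
  pose proof (HB 0%nat ltac:(lia)). pose proof (HB 1%nat ltac:(lia)).
  pose proof (HB 2%nat ltac:(lia)). pose proof (HB 3%nat ltac:(lia)).
  destruct k as [|[|[|[|[|[|k]]]]]]; unfold wedge, dvec;
  try (rewrite Derive_minus by (apply ex_derive_mult; assumption);
       rewrite !Derive_mult by assumption; ring).
  rewrite Derive_const; ring.
Qed.

Lemma Derive_scalev c A s n : ex_derive c s -> exv n A s -> forall k, (k < n)%nat ->
  Derive (fun u => scale (c u) (A u) k) s = Derive c s * A s k + c s * dvec A s k.
Proof.
  intros Hc HA k Hk. unfold scale, dvec. apply Derive_mult; auto.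
Qed.

Lemma exv_x n A x y : vCinf n A -> exv n (fun s => A s y) x.
Proof. intros H i Hi. apply (Cinf_exx (fun a b => A a b i)). apply H; auto. Qed.
Lemma exv_y n A x y : vCinf n A -> exv n (fun s => A x s) y.
Proof. intros H i Hi. apply (Cinf_exy (fun a b => A a b i)). apply H; auto. Qed.

Lemma dx_dot n A B x y : vCinf n A -> vCinf n B ->
  dxs (fun a b => dot n (A a b) (B a b)) x y = dot n (dx A x y) (B x y) + dot n (A x y) (dx B x y).
Proof.
  intros HA HB. unfold dxs.
  exact (Derive_dot n (fun s => A s y) (fun s => B s y) x (exv_x n A x y HA) (exv_x n B x y HB)).
Qed.
Lemma dy_dot n A B x y : vCinf n A -> vCinf n B ->
  dys (fun a b => dot n (A a b) (B a b)) x y = dot n (dy A x y) (B x y) + dot n (A x y) (dy B x y).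
Proof.
  intros HA HB. unfold dys.
  exact (Derive_dot n (fun s => A x s) (fun s => B x s) y (exv_y n A x y HA) (exv_y n B x y HB)).
Qed.

Lemma dx_wedge A B x y k : vCinf 4 A -> vCinf 4 B ->
  dx (fun a b => wedge (A a b) (B a b)) x y k = wedge (dx A x y) (B x y) k + wedge (A x y) (dx B x y) k.
Proof.
  intros HA HB. unfold dx at 1, dxs.
  exact (Derive_wedge (fun s => A s y) (fun s => B s y) x (exv_x 4 A x y HA) (exv_x 4 B x y HB) k).
Qed.
Lemma dy_wedge A B x y k : vCinf 4 A -> vCinf 4 B ->
  dy (fun a b => wedge (A a b) (B a b)) x y k = wedge (dy A x y) (B x y) k + wedge (A x y) (dy B x y) k.
Proof.
  intros HA HB. unfold dy at 1, dys.
  exact (Derive_wedge (fun s => A x s) (fun s => B x s) y (exv_y 4 A x y HA) (exv_y 4 B x y HB) k).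
Qed.

Lemma dxs_const_fun f c x y : (forall a b, f a b = c) -> dxs f x y = 0.
Proof.
  intro H. unfold dxs. rewrite (Derive_ext (fun s => f s y) (fun _ => c)) by auto. apply Derive_const.
Qed.
Lemma dys_const_fun f c x y : (forall a b, f a b = c) -> dys f x y = 0.
Proof.
  intro H. unfold dys. rewrite (Derive_ext (fun s => f x s) (fun _ => c)) by auto. apply Derive_const.
Qed.

Lemma dxs_mult_pt f g x y : Cinf f -> Cinf g ->
  dxs (fun a b => f a b * g a b) x y = dxs f x y * g x y + f x y * dxs g x y.
Proof. intros F G. rewrite (dxs_mult f g (Cinf_C0 f F) (Cinf_C0 g G)). reflexivity. Qed.
Lemma dys_mult_pt f g x y : Cinf f -> Cinf g ->
  dys (fun a b => f a b * g a b) x y = dys f x y * g x y + f x y * dys g x y.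
Proof. intros F G. rewrite (dys_mult f g (Cinf_C0 f F) (Cinf_C0 g G)). reflexivity. Qed.
Lemma dxs_plus_pt f g x y : Cinf f -> Cinf g ->
  dxs (fun a b => f a b + g a b) x y = dxs f x y + dxs g x y.
Proof. intros F G. rewrite (dxs_plus f g (Cinf_C0 f F) (Cinf_C0 g G)). reflexivity. Qed.
Lemma dys_plus_pt f g x y : Cinf f -> Cinf g ->
  dys (fun a b => f a b + g a b) x y = dys f x y + dys g x y.
Proof. intros F G. rewrite (dys_plus f g (Cinf_C0 f F) (Cinf_C0 g G)). reflexivity. Qed.
Lemma dxs_inv_pt f x y : Cinf f -> (forall a b, f a b <> 0) ->
  dxs (fun a b => / f a b) x y = - dxs f x y / (f x y * f x y).
Proof. intros F H. rewrite (dxs_inv f (Cinf_C0 f F) H). field. apply H. Qed.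
Lemma dys_inv_pt f x y : Cinf f -> (forall a b, f a b <> 0) ->
  dys (fun a b => / f a b) x y = - dys f x y / (f x y * f x y).
Proof. intros F H. rewrite (dys_inv f (Cinf_C0 f F) H). field. apply H. Qed.

Lemma schwarz f x y : Cinf f -> dxs (dys f) x y = dys (dxs f) x y.
Proof.
  intro F. unfold dxs, dys.
  apply Schwarz.
  - exists (mkposreal 1 Rlt_0_1). intros u v _ _.
    split; [apply (Cinf_exx f); auto|].
    split; [apply (Cinf_exy f); auto|].
    split; [apply (Cinf_exx (dys f)); apply Cinf_dys; auto|].
    apply (Cinf_exy (dxs f)); apply Cinf_dxs; auto.
  - apply continuity_2d_pt_filterlim.
    destruct (Cinf_C0 _ (Cinf_dxs _ (Cinf_dys _ F)) x y) as [H _]. exact H.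
  - apply continuity_2d_pt_filterlim.
    destruct (Cinf_C0 _ (Cinf_dys _ (Cinf_dxs _ F)) x y) as [H _]. exact H.
Qed.

Lemma dxs_wedge A B x y k : vCinf 4 A -> vCinf 4 B ->
  dxs (fun a b => wedge (A a b) (B a b) k) x y = wedge (dx A x y) (B x y) k + wedge (A x y) (dx B x y) k.
Proof. intros; exact (dx_wedge A B x y k H H0). Qed.
Lemma dys_wedge A B x y k : vCinf 4 A -> vCinf 4 B ->
  dys (fun a b => wedge (A a b) (B a b) k) x y = wedge (dy A x y) (B x y) k + wedge (A x y) (dy B x y) k.
Proof. intros; exact (dy_wedge A B x y k H H0). Qed.
Lemma dxs_ext f g x y : (forall a b, f a b = g a b) -> dxs f x y = dxs g x y.
Proof. intro E. unfold dxs. apply Derive_ext. auto. Qed.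
Lemma dys_ext f g x y : (forall a b, f a b = g a b) -> dys f x y = dys g x y.
Proof. intro E. unfold dys. apply Derive_ext. auto. Qed.
Lemma dxs_minus_pt f g x y : Cinf f -> Cinf g ->
  dxs (fun a b => f a b - g a b) x y = dxs f x y - dxs g x y.
Proof.
  intros F G. unfold Rminus.
  rewrite (dxs_ext _ (fun a b => f a b + (-1) * g a b)) by (intros; ring).
  rewrite dxs_plus_pt, dxs_mult_pt, dxs_const. ring.
  apply Cinf_const. auto. auto. apply Cinf_mult; [apply Cinf_const|auto].
Qed.
Lemma dys_minus_pt f g x y : Cinf f -> Cinf g ->
  dys (fun a b => f a b - g a b) x y = dys f x y - dys g x y.
Proof.
  intros F G. unfold Rminus.
  rewrite (dys_ext _ (fun a b => f a b + (-1) * g a b)) by (intros; ring).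
  rewrite dys_plus_pt, dys_mult_pt, dys_const. ring.
  apply Cinf_const. auto. auto. apply Cinf_mult; [apply Cinf_const|auto].
Qed.
Lemma wedge_ext_r a b b' k : (forall i, (i < 4)%nat -> b i = b' i) -> wedge a b k = wedge a b' k.
Proof.
  intro E. unfold wedge. rewrite (E 0%nat), (E 1%nat), (E 2%nat), (E 3%nat) by lia. reflexivity.
Qed.
Lemma wedge_ext_l a a' b k : (forall i, (i < 4)%nat -> a i = a' i) -> wedge a b k = wedge a' b k.
Proof.
  intro E. unfold wedge. rewrite (E 0%nat), (E 1%nat), (E 2%nat), (E 3%nat) by lia. reflexivity.
Qed.


Lemma dot_sym4 a b : dot 4 a b = dot 4 b a.
Proof. rewrite !dot4E; ring. Qed.

Definition frame_rel (X Y P : vec) (L : R) : Prop :=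
  0 < L /\ dot 4 P P = 1 /\ dot 4 X X = L /\ dot 4 Y Y = L /\ dot 4 X Y = 0 /\
  dot 4 P X = 0 /\ dot 4 P Y = 0.

Definition Nof (X Y P : vec) (L : R) : vec := scale (/ L) (cross4 X Y P).

Lemma dot_scale_l n c a b : dot n (scale c a) b = c * dot n a b.
Proof. unfold dot, scale. induction n; simpl; [ring|rewrite IHn; ring]. Qed.
Lemma dot_scale_r n c a b : dot n a (scale c b) = c * dot n a b.
Proof. unfold dot, scale. induction n; simpl; [ring|rewrite IHn; ring]. Qed.

Lemma DD X Y P L : frame_rel X Y P L -> dot 4 (cross4 X Y P) (cross4 X Y P) = L * L.
Proof.
  intros (HL & HPP & HXX & HYY & HXY & HPX & HPY).
  rewrite gram. rewrite (dot_sym4 Y X), (dot_sym4 X P), (dot_sym4 Y P).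
  rewrite HPP, HXX, HYY, HXY, HPX, HPY. unfold det3m; ring.
Qed.

Lemma NX X Y P L : dot 4 (Nof X Y P L) X = 0.
Proof. unfold Nof. rewrite dot_scale_l, cross_perp1. ring. Qed.
Lemma NY X Y P L : dot 4 (Nof X Y P L) Y = 0.
Proof. unfold Nof. rewrite dot_scale_l, cross_perp2. ring. Qed.
Lemma NP X Y P L : dot 4 (Nof X Y P L) P = 0.
Proof. unfold Nof. rewrite dot_scale_l, cross_perp3. ring. Qed.
Lemma NN X Y P L : frame_rel X Y P L -> dot 4 (Nof X Y P L) (Nof X Y P L) = 1.
Proof.
  intro H. unfold Nof. rewrite dot_scale_l, dot_scale_r, (DD X Y P L H).
  destruct H as [HL _]. field. lra.
Qed.

Lemma vnormD X Y P L : frame_rel X Y P L -> vnorm 4 (cross4 X Y P) = L.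
Proof.
  intro H. unfold vnorm. rewrite (DD X Y P L H). destruct H as [HL _].
  rewrite sqrt_square; lra.
Qed.

Lemma span X Y P L u i : frame_rel X Y P L -> (i < 4)%nat ->
  u i = (dot 4 u X / L) * X i + (dot 4 u Y / L) * Y i + dot 4 u P * P i
        + dot 4 u (Nof X Y P L) * Nof X Y P L i.
Proof.
  intros H Hi. pose proof (DD X Y P L H) as HD.
  destruct H as (HL & HPP & HXX & HYY & HXY & HPX & HPY).
  pose proof (cramer X Y P (cross4 X Y P) u i Hi) as C.
  rewrite HD in C.
  rewrite !gram in C.
  assert (HYX : dot 4 Y X = 0) by (rewrite dot_sym4; auto).
  assert (HXP : dot 4 X P = 0) by (rewrite dot_sym4; auto).
  assert (HYP : dot 4 Y P = 0) by (rewrite dot_sym4; auto).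
  rewrite ?HPP, ?HXX, ?HYY, ?HXY, ?HPX, ?HPY, ?HYX, ?HXP, ?HYP in C.
  unfold det3m in C. unfold Nof. rewrite dot_scale_r. unfold scale.
  rewrite (dot_sym4 u (cross4 X Y P)).
  apply (Rmult_eq_reg_l (L * L)); [|nra].
  rewrite C. field. lra.
Qed.

Lemma span_eq X Y P L u cX cY cP cN : frame_rel X Y P L ->
  dot 4 u X = cX -> dot 4 u Y = cY -> dot 4 u P = cP -> dot 4 u (Nof X Y P L) = cN ->
  forall i, (i < 4)%nat -> u i = (cX / L) * X i + (cY / L) * Y i + cP * P i + cN * Nof X Y P L i.
Proof. intros H A B C D i Hi. rewrite (span X Y P L u i H Hi). subst. reflexivity. Qed.

Lemma PN_hodge X Y P L k : frame_rel X Y P L -> (k < 6)%nat ->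
  wedge P (Nof X Y P L) k = / L * hodge (wedge X Y) k.
Proof.
  intros H Hk. destruct H as (HL & HPP & HXX & HYY & HXY & HPX & HPY).
  unfold Nof.
  assert (E : forall c a b k, wedge a (scale c b) k = c * wedge a b k).
  { intros c a b k'. unfold wedge, scale. destruct k' as [|[|[|[|[|[|k']]]]]]; ring. }
  rewrite E, (wedge_cross_hodge X Y P k Hk), HPP, HPX, HPY. ring.
Qed.


Definition U1 (X Y P N : vec) (L : R) : vec := fun k => / L * wedge X Y k + wedge P N k.
Definition U2 (X Y P N : vec) : vec := fun k => wedge Y P k + wedge X N k.
Definition U3 (X Y P N : vec) : vec := fun k => wedge X P k - wedge Y N k.

Ltac spec4 H := let H0 := fresh H in let H1 := fresh H in let H2 := fresh H in let H3 := fresh H in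
  pose proof (H 0%nat ltac:(lia)) as H0; pose proof (H 1%nat ltac:(lia)) as H1;
  pose proof (H 2%nat ltac:(lia)) as H2; pose proof (H 3%nat ltac:(lia)) as H3;
  rewrite ?H0, ?H1, ?H2, ?H3; clear H0 H1 H2 H3.


Lemma ident_x (X Y P N Xx Xy Nx : vec) (L vx vy a b : R) :
  L <> 0 ->
  (forall i, (i < 4)%nat -> Xx i = vx * X i - vy * Y i - L * P i + a * N i) ->
  (forall i, (i < 4)%nat -> Xy i = vy * X i + vx * Y i + b * N i) ->
  (forall i, (i < 4)%nat -> Nx i = -(a / L) * X i - (b / L) * Y i) ->
  forall k, - (2 * vx / L) * wedge X Y k + / L * (wedge Xx Y k + wedge X Xy k)
     + wedge X N k + wedge P Nx k
   = (1 + b / L) * U2 X Y P N k + (a / L) * U3 X Y P N k.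
Proof.
  intros HL EXx EXy ENx k. unfold U2, U3.
  destruct k as [|[|[|[|[|[|k]]]]]]; unfold wedge;
    [spec4 EXx; spec4 EXy; spec4 ENx; field; auto ..|ring].
Qed.

Lemma ident_y (X Y P N Xy Yy Ny : vec) (L vx vy a b : R) :
  L <> 0 ->
  (forall i, (i < 4)%nat -> Xy i = vy * X i + vx * Y i + b * N i) ->
  (forall i, (i < 4)%nat -> Yy i = - vx * X i + vy * Y i - L * P i - a * N i) ->
  (forall i, (i < 4)%nat -> Ny i = -(b / L) * X i + (a / L) * Y i) ->
  forall k, - (2 * vy / L) * wedge X Y k + / L * (wedge Xy Y k + wedge X Yy k)
     + wedge Y N k + wedge P Ny k
   = (-1 + b / L) * U3 X Y P N k + (- a / L) * U2 X Y P N k.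
Proof.
  intros HL EXy EYy ENy k. unfold U2, U3.
  destruct k as [|[|[|[|[|[|k]]]]]]; unfold wedge;
    [spec4 EXy; spec4 EYy; spec4 ENy; field; auto ..|ring].
Qed.

Lemma ident_lap0 (X Y P N Xx Xy Yy Nx Ny : vec) (L vx vy a b : R) :
  L <> 0 ->
  (forall i, (i < 4)%nat -> Xx i = vx * X i - vy * Y i - L * P i + a * N i) ->
  (forall i, (i < 4)%nat -> Xy i = vy * X i + vx * Y i + b * N i) ->
  (forall i, (i < 4)%nat -> Yy i = - vx * X i + vy * Y i - L * P i - a * N i) ->
  (forall i, (i < 4)%nat -> Nx i = -(a / L) * X i - (b / L) * Y i) ->
  (forall i, (i < 4)%nat -> Ny i = -(b / L) * X i + (a / L) * Y i) ->
  forall k,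
   (- 2 * b * vx / L) * U2 X Y P N k + (1 + b / L) * (wedge Xy P k + wedge Y X k + wedge Xx N k + wedge X Nx k)
 + (- 2 * a * vx / L) * U3 X Y P N k + (a / L) * (wedge Xx P k + wedge X X k - (wedge Xy N k + wedge Y Nx k))
 + (- 2 * b * vy / L) * U3 X Y P N k + (-1 + b / L) * (wedge Xy P k + wedge X Y k - (wedge Yy N k + wedge Y Ny k))
 + (2 * a * vy / L) * U2 X Y P N k + (- a / L) * (wedge Yy P k + wedge Y Y k + wedge Xy N k + wedge X Ny k)
 = - (2 * L + 2 * (a * a + b * b) / L) * U1 X Y P N L k.
Proof.
  intros HL EXx EXy EYy ENx ENy k. unfold U1, U2, U3.
  destruct k as [|[|[|[|[|[|k]]]]]]; unfold wedge;
    [spec4 EXx; spec4 EXy; spec4 EYy; spec4 ENx; spec4 ENy; field; auto ..|ring].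
Qed.


Lemma dot6_lin (p q r s : vec) (al be ga de : R) :
  dot 6 (fun k => al * p k + be * q k) (fun k => ga * r k + de * s k) =
  al * ga * dot 6 p r + al * de * dot 6 p s + be * ga * dot 6 q r + be * de * dot 6 q s.
Proof. rewrite !dot6E; ring. Qed.

Lemma dot6_sym a b : dot 6 a b = dot 6 b a.
Proof. rewrite !dot6E; ring. Qed.

Ltac frame_facts X Y P L H :=
  let N := constr:(Nof X Y P L) in
  pose proof (NX X Y P L); pose proof (NY X Y P L); pose proof (NP X Y P L); pose proof (NN X Y P L H);
  let HL := fresh in let HPP := fresh in let HXX := fresh in let HYY := fresh in
  let HXY := fresh in let HPX := fresh in let HPY := fresh in
  destruct H as (HL & HPP & HXX & HYY & HXY & HPX & HPY);
  assert (dot 4 Y X = 0) by (rewrite dot_sym4; auto);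
  assert (dot 4 X P = 0) by (rewrite dot_sym4; auto);
  assert (dot 4 Y P = 0) by (rewrite dot_sym4; auto);
  assert (dot 4 X N = 0) by (rewrite dot_sym4; auto);
  assert (dot 4 Y N = 0) by (rewrite dot_sym4; auto);
  assert (dot 4 P N = 0) by (rewrite dot_sym4; auto).

Lemma d6_add_l p q r : dot 6 (fun k => p k + q k) r = dot 6 p r + dot 6 q r.
Proof. rewrite !dot6E; ring. Qed.
Lemma d6_sub_l p q r : dot 6 (fun k => p k - q k) r = dot 6 p r - dot 6 q r.
Proof. rewrite !dot6E; ring. Qed.
Lemma d6_scal_l c p r : dot 6 (fun k => c * p k) r = c * dot 6 p r.
Proof. rewrite !dot6E; ring. Qed.
Lemma d6_add_r p q r : dot 6 r (fun k => p k + q k) = dot 6 r p + dot 6 r q.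
Proof. rewrite !dot6E; ring. Qed.
Lemma d6_sub_r p q r : dot 6 r (fun k => p k - q k) = dot 6 r p - dot 6 r q.
Proof. rewrite !dot6E; ring. Qed.
Lemma d6_scal_r c p r : dot 6 r (fun k => c * p k) = c * dot 6 r p.
Proof. rewrite !dot6E; ring. Qed.

Lemma gram_U X Y P L : frame_rel X Y P L ->
  let N := Nof X Y P L in
  dot 6 (U1 X Y P N L) (U1 X Y P N L) = 2 /\
  dot 6 (U2 X Y P N) (U2 X Y P N) = 2 * L /\
  dot 6 (U3 X Y P N) (U3 X Y P N) = 2 * L /\
  dot 6 (U2 X Y P N) (U3 X Y P N) = 0 /\
  dot 6 (U1 X Y P N L) (U2 X Y P N) = 0 /\
  dot 6 (U1 X Y P N L) (U3 X Y P N) = 0.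
Proof.
  intro H. pose proof H as H'. cbv zeta. frame_facts X Y P L H'. destruct H as [HL _].
  unfold U1, U2, U3.
  rewrite ?d6_add_l, ?d6_sub_l, ?d6_scal_l, ?d6_add_r, ?d6_sub_r, ?d6_scal_r, ?wedge_dot.
  repeat match goal with H : dot 4 _ _ = _ |- _ => rewrite H; clear H end.
  repeat split; field; lra.
Qed.


Definition Hyp (phi : R -> R -> vec) (v : R -> R -> R) (t : R) : Prop :=
  smooth 4 phi /\ (forall x y, dot 4 (phi x y) (phi x y) = 1) /\
  isometric 4 phi (fun x y => exp (2 * v x y)) /\ minimal_S3 phi /\
  (forall x y, hopfS3 phi x y = Cmult (0, / 2) (cos t, sin t)).

Definition Lf (phi : R -> R -> vec) x y := dot 4 (dx phi x y) (dx phi x y).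
Definition Nf (phi : R -> R -> vec) x y := Nof (dx phi x y) (dy phi x y) (phi x y) (Lf phi x y).

Lemma vC_dx n f : vCinf n f -> vCinf n (dx f).
Proof. intros H i Hi. apply (Cinf_dxs (fun a b => f a b i)). apply H; auto. Qed.
Lemma vC_dy n f : vCinf n f -> vCinf n (dy f).
Proof. intros H i Hi. apply (Cinf_dys (fun a b => f a b i)). apply H; auto. Qed.

Section M.
Variables (phi : R -> R -> vec) (v : R -> R -> R) (t : R).
Hypothesis H : Hyp phi v t.

Lemma vP : vCinf 4 phi.
Proof. apply vCinf_of_smooth. apply H. Qed.
Lemma vX : vCinf 4 (dx phi). Proof. apply vC_dx, vP. Qed.
Lemma vY : vCinf 4 (dy phi). Proof. apply vC_dy, vP. Qed.
Lemma vXx : vCinf 4 (dx (dx phi)). Proof. apply vC_dx, vX. Qed.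
Lemma vXy : vCinf 4 (dy (dx phi)). Proof. apply vC_dy, vX. Qed.
Lemma vYx : vCinf 4 (dx (dy phi)). Proof. apply vC_dx, vY. Qed.
Lemma vYy : vCinf 4 (dy (dy phi)). Proof. apply vC_dy, vY. Qed.

Lemma L_exp x y : Lf phi x y = exp (2 * v x y).
Proof. destruct H as (_ & _ & Hi & _). unfold Lf. apply (Hi x y). Qed.
Lemma L_pos x y : 0 < Lf phi x y.
Proof. rewrite L_exp. apply exp_pos. Qed.
Lemma L_nz x y : Lf phi x y <> 0.
Proof. pose proof (L_pos x y); lra. Qed.
Lemma CL : Cinf (Lf phi).
Proof. apply (Cinf_dot 4 (dx phi) (dx phi) vX vX). Qed.
Lemma CLi : Cinf (fun x y => / Lf phi x y).
Proof. apply Cinf_inv; [apply L_nz|apply CL]. Qed.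

Lemma vN : vCinf 4 (Nf phi).
Proof.
  intros i Hi. unfold Nf, Nof, scale.
  apply Cinf_mult; [apply CLi|].
  apply (vCinf_cross (dx phi) (dy phi) phi vX vY vP).
Qed.

Lemma PX x y : dot 4 (phi x y) (dx phi x y) = 0.
Proof.
  destruct H as (_ & Hu & _).
  pose proof (dx_dot 4 phi phi x y vP vP) as E.
  rewrite (dxs_const_fun _ 1 x y) in E by (intros; apply Hu).
  rewrite dot_sym4 in E. lra.
Qed.
Lemma PY x y : dot 4 (phi x y) (dy phi x y) = 0.
Proof.
  destruct H as (_ & Hu & _).
  pose proof (dy_dot 4 phi phi x y vP vP) as E.
  rewrite (dys_const_fun _ 1 x y) in E by (intros; apply Hu).
  rewrite dot_sym4 in E. lra.
Qed.

Lemma frame x y : frame_rel (dx phi x y) (dy phi x y) (phi x y) (Lf phi x y).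
Proof.
  destruct H as (_ & Hu & Hi & _).
  destruct (Hi x y) as (A & B & C).
  unfold frame_rel. repeat split.
  - apply L_pos.
  - apply Hu.
  - unfold Lf. rewrite A; exact B.
  - exact C.
  - apply PX.
  - apply PY.
Qed.

Lemma normal_eq : normalS3 phi = Nf phi.
Proof.
  apply functional_extensionality; intro x; apply functional_extensionality; intro y.
  unfold normalS3, Nf, Nof. rewrite (vnormD _ _ _ _ (frame x y)). reflexivity.
Qed.


Lemma dot4_ext_l a b c : (forall i, (i < 4)%nat -> a i = b i) -> dot 4 a c = dot 4 b c.
Proof.
  intro E. rewrite !dot4E. rewrite (E 0%nat), (E 1%nat), (E 2%nat), (E 3%nat) by lia. reflexivity.
Qed.
Lemma dot4_vadd a b c : dot 4 (vadd a b) c = dot 4 a c + dot 4 b c.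
Proof. rewrite !dot4E; unfold vadd; ring. Qed.

Lemma schw x y i : (i < 4)%nat -> dy (dx phi) x y i = dx (dy phi) x y i.
Proof.
  intro Hi. pose proof (vP i Hi) as F.
  exact (eq_sym (schwarz (fun a b => phi a b i) x y F)).
Qed.

Lemma NXf x y : dot 4 (Nf phi x y) (dx phi x y) = 0.
Proof. apply NX. Qed.
Lemma NYf x y : dot 4 (Nf phi x y) (dy phi x y) = 0.
Proof. apply NY. Qed.
Lemma NPf x y : dot 4 (Nf phi x y) (phi x y) = 0.
Proof. apply NP. Qed.
Lemma NNf x y : dot 4 (Nf phi x y) (Nf phi x y) = 1.
Proof. apply NN, frame. Qed.

Ltac dconst f c := first [rewrite (dxs_const_fun f c) | rewrite (dys_const_fun f c)].

Lemma rPXx x y : dot 4 (phi x y) (dx (dx phi) x y) = - Lf phi x y.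
Proof.
  pose proof (dx_dot 4 phi (dx phi) x y vP vX) as E.
  rewrite (dxs_const_fun _ 0 x y) in E by (intros; apply PX).
  unfold Lf. lra.
Qed.
Lemma rPXy x y : dot 4 (phi x y) (dy (dx phi) x y) = 0.
Proof.
  pose proof (dy_dot 4 phi (dx phi) x y vP vX) as E.
  rewrite (dys_const_fun _ 0 x y) in E by (intros; apply PX).
  rewrite dot_sym4 in E. destruct (frame x y) as (_ & _ & _ & _ & C & _). lra.
Qed.
Lemma rPYy x y : dot 4 (phi x y) (dy (dy phi) x y) = - Lf phi x y.
Proof.
  pose proof (dy_dot 4 phi (dy phi) x y vP vY) as E.
  rewrite (dys_const_fun _ 0 x y) in E by (intros; apply PY).
  destruct (frame x y) as (_ & _ & _ & B & _). lra.
Qed.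
Lemma YYeq : (fun a b => dot 4 (dy phi a b) (dy phi a b)) = (fun a b => dot 4 (dx phi a b) (dx phi a b)).
Proof.
  apply functional_extensionality; intro a; apply functional_extensionality; intro b.
  destruct (frame a b) as (_ & _ & _ & B & _). exact B.
Qed.
Lemma rYYx x y : dot 4 (dy phi x y) (dx (dy phi) x y) = dot 4 (dx phi x y) (dx (dx phi) x y).
Proof.
  pose proof (dx_dot 4 (dy phi) (dy phi) x y vY vY) as E.
  pose proof (dx_dot 4 (dx phi) (dx phi) x y vX vX) as E2.
  rewrite YYeq in E. rewrite E in E2.
  rewrite (dot_sym4 (dx (dy phi) x y)), (dot_sym4 (dx (dx phi) x y)) in E2. lra.
Qed.
Lemma rYYy x y : dot 4 (dy phi x y) (dy (dy phi) x y) = dot 4 (dx phi x y) (dy (dx phi) x y).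
Proof.
  pose proof (dy_dot 4 (dy phi) (dy phi) x y vY vY) as E.
  pose proof (dy_dot 4 (dx phi) (dx phi) x y vX vX) as E2.
  rewrite YYeq in E. rewrite E in E2.
  rewrite (dot_sym4 (dy (dy phi) x y)), (dot_sym4 (dy (dx phi) x y)) in E2. lra.
Qed.
Lemma XYconst a b : dot 4 (dx phi a b) (dy phi a b) = 0.
Proof. destruct (frame a b) as (_ & _ & _ & _ & C & _). exact C. Qed.
Lemma rXYx x y : dot 4 (dx (dx phi) x y) (dy phi x y) + dot 4 (dx phi x y) (dx (dy phi) x y) = 0.
Proof.
  pose proof (dx_dot 4 (dx phi) (dy phi) x y vX vY) as E.
  rewrite (dxs_const_fun _ 0 x y) in E by (intros; apply XYconst). lra.
Qed.
Lemma rXYy x y : dot 4 (dy (dx phi) x y) (dy phi x y) + dot 4 (dx phi x y) (dy (dy phi) x y) = 0.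
Proof.
  pose proof (dy_dot 4 (dx phi) (dy phi) x y vX vY) as E.
  rewrite (dys_const_fun _ 0 x y) in E by (intros; apply XYconst). lra.
Qed.
Lemma rNXx x y : dot 4 (dx (Nf phi) x y) (dx phi x y) + dot 4 (Nf phi x y) (dx (dx phi) x y) = 0.
Proof.
  pose proof (dx_dot 4 (Nf phi) (dx phi) x y vN vX) as E.
  rewrite (dxs_const_fun _ 0 x y) in E by (intros; apply NXf). lra.
Qed.
Lemma rNXy x y : dot 4 (dy (Nf phi) x y) (dx phi x y) + dot 4 (Nf phi x y) (dy (dx phi) x y) = 0.
Proof.
  pose proof (dy_dot 4 (Nf phi) (dx phi) x y vN vX) as E.
  rewrite (dys_const_fun _ 0 x y) in E by (intros; apply NXf). lra.
Qed.
Lemma rNYx x y : dot 4 (dx (Nf phi) x y) (dy phi x y) + dot 4 (Nf phi x y) (dx (dy phi) x y) = 0.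
Proof.
  pose proof (dx_dot 4 (Nf phi) (dy phi) x y vN vY) as E.
  rewrite (dxs_const_fun _ 0 x y) in E by (intros; apply NYf). lra.
Qed.
Lemma rNYy x y : dot 4 (dy (Nf phi) x y) (dy phi x y) + dot 4 (Nf phi x y) (dy (dy phi) x y) = 0.
Proof.
  pose proof (dy_dot 4 (Nf phi) (dy phi) x y vN vY) as E.
  rewrite (dys_const_fun _ 0 x y) in E by (intros; apply NYf). lra.
Qed.
Lemma rNPx x y : dot 4 (dx (Nf phi) x y) (phi x y) = 0.
Proof.
  pose proof (dx_dot 4 (Nf phi) phi x y vN vP) as E.
  rewrite (dxs_const_fun _ 0 x y) in E by (intros; apply NPf). rewrite NXf in E. lra.
Qed.
Lemma rNPy x y : dot 4 (dy (Nf phi) x y) (phi x y) = 0.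
Proof.
  pose proof (dy_dot 4 (Nf phi) phi x y vN vP) as E.
  rewrite (dys_const_fun _ 0 x y) in E by (intros; apply NPf). rewrite NYf in E. lra.
Qed.
Lemma rNNx x y : dot 4 (dx (Nf phi) x y) (Nf phi x y) = 0.
Proof.
  pose proof (dx_dot 4 (Nf phi) (Nf phi) x y vN vN) as E.
  rewrite (dxs_const_fun _ 1 x y) in E by (intros; apply NNf).
  rewrite (dot_sym4 (Nf phi x y)) in E. lra.
Qed.
Lemma rNNy x y : dot 4 (dy (Nf phi) x y) (Nf phi x y) = 0.
Proof.
  pose proof (dy_dot 4 (Nf phi) (Nf phi) x y vN vN) as E.
  rewrite (dys_const_fun _ 1 x y) in E by (intros; apply NNf).
  rewrite (dot_sym4 (Nf phi x y)) in E. lra.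
Qed.
Lemma rmin x y : dot 4 (Nf phi x y) (dx (dx phi) x y) + dot 4 (Nf phi x y) (dy (dy phi) x y) = 0.
Proof.
  destruct H as (_ & _ & _ & Hm & _).
  pose proof (Hm x y (Nf phi x y)) as E.
  specialize (E (NPf x y)).
  unfold lap in E. rewrite dot4_vadd in E.
  rewrite (dot_sym4 (Nf phi x y)), (dot_sym4 (Nf phi x y)). exact E.
Qed.
Lemma rhopf x y :
  dot 4 (dx phi x y) (dx (Nf phi) x y) - dot 4 (dy phi x y) (dy (Nf phi) x y) = - 2 * sin t /\
  dot 4 (dx phi x y) (dy (Nf phi) x y) + dot 4 (dy phi x y) (dx (Nf phi) x y) = - 2 * cos t.
Proof.
  destruct H as (_ & _ & _ & _ & Hh).
  pose proof (Hh x y) as E. unfold hopfS3 in E. rewrite normal_eq in E.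
  unfold cdot, dz in E. simpl in E.
  rewrite !dot_scale_l, !dot_scale_r in E.
  injection E as E1 E2. split; lra.
Qed.

Definition vx x y := dot 4 (dx phi x y) (dx (dx phi) x y) / Lf phi x y.
Definition vy x y := dot 4 (dx phi x y) (dy (dx phi) x y) / Lf phi x y.

Lemma YxXy_dot x y c : dot 4 (dx (dy phi) x y) c = dot 4 (dy (dx phi) x y) c.
Proof. apply dot4_ext_l. intros i Hi. symmetry. apply schw; auto. Qed.

Lemma aN x y : dot 4 (Nf phi x y) (dx (dx phi) x y) = sin t.
Proof.
  destruct (rhopf x y) as [E _]. pose proof (rNXx x y). pose proof (rmin x y). pose proof (rNYy x y).
  rewrite (dot_sym4 (dx phi x y)), (dot_sym4 (dy phi x y)) in E. lra.
Qed.
Lemma bN x y : dot 4 (Nf phi x y) (dy (dx phi) x y) = cos t.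
Proof.
  destruct (rhopf x y) as [_ E]. pose proof (rNXy x y). pose proof (rNYx x y).
  rewrite (dot_sym4 (Nf phi x y) (dx (dy phi) x y)), YxXy_dot, (dot_sym4 (dy (dx phi) x y)) in H1.
  rewrite (dot_sym4 (dx phi x y)), (dot_sym4 (dy phi x y)) in E. lra.
Qed.

Lemma dXxX x y : dot 4 (dx (dx phi) x y) (dx phi x y) = vx x y * Lf phi x y.
Proof. unfold vx. rewrite dot_sym4. field. apply L_nz. Qed.
Lemma dXyX x y : dot 4 (dy (dx phi) x y) (dx phi x y) = vy x y * Lf phi x y.
Proof. unfold vy. rewrite dot_sym4. field. apply L_nz. Qed.
Lemma dXxY x y : dot 4 (dx (dx phi) x y) (dy phi x y) = - (vy x y * Lf phi x y).
Proof.
  pose proof (rXYx x y) as E. rewrite (dot_sym4 (dx phi x y) (dx (dy phi) x y)), YxXy_dot in E.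
  rewrite <- (dXyX x y). lra.
Qed.
Lemma dXyY x y : dot 4 (dy (dx phi) x y) (dy phi x y) = vx x y * Lf phi x y.
Proof.
  rewrite <- YxXy_dot, dot_sym4, rYYx, <- dXxX, dot_sym4. reflexivity.
Qed.
Lemma dYyX x y : dot 4 (dy (dy phi) x y) (dx phi x y) = - (vx x y * Lf phi x y).
Proof. pose proof (rXYy x y) as E. rewrite dXyY in E. rewrite dot_sym4. lra. Qed.
Lemma dYyY x y : dot 4 (dy (dy phi) x y) (dy phi x y) = vy x y * Lf phi x y.
Proof. rewrite dot_sym4, rYYy, dot_sym4. apply dXyX. Qed.

Lemma eXx x y i : (i < 4)%nat -> dx (dx phi) x y i =
  vx x y * dx phi x y i - vy x y * dy phi x y i - Lf phi x y * phi x y i + sin t * Nf phi x y i.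
Proof.
  intro Hi.
  rewrite (span_eq _ _ _ _ (dx (dx phi) x y) (vx x y * Lf phi x y) (- (vy x y * Lf phi x y))
    (- Lf phi x y) (sin t) (frame x y) (dXxX x y) (dXxY x y)
    ltac:(rewrite dot_sym4; apply rPXx) ltac:(rewrite dot_sym4; apply aN) i Hi).
  unfold Nf. field. apply L_nz.
Qed.
Lemma eXy x y i : (i < 4)%nat -> dy (dx phi) x y i =
  vy x y * dx phi x y i + vx x y * dy phi x y i + cos t * Nf phi x y i.
Proof.
  intro Hi.
  rewrite (span_eq _ _ _ _ (dy (dx phi) x y) (vy x y * Lf phi x y) (vx x y * Lf phi x y)
    0 (cos t) (frame x y) (dXyX x y) (dXyY x y)
    ltac:(rewrite dot_sym4; apply rPXy) ltac:(rewrite dot_sym4; apply bN) i Hi).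
  unfold Nf. field. apply L_nz.
Qed.
Lemma eYy x y i : (i < 4)%nat -> dy (dy phi) x y i =
  - vx x y * dx phi x y i + vy x y * dy phi x y i - Lf phi x y * phi x y i - sin t * Nf phi x y i.
Proof.
  intro Hi.
  assert (HN : dot 4 (dy (dy phi) x y) (Nf phi x y) = - sin t).
  { rewrite dot_sym4. pose proof (rmin x y). pose proof (aN x y). lra. }
  rewrite (span_eq _ _ _ _ (dy (dy phi) x y) (- (vx x y * Lf phi x y)) (vy x y * Lf phi x y)
    (- Lf phi x y) (- sin t) (frame x y) (dYyX x y) (dYyY x y)
    ltac:(rewrite dot_sym4; apply rPYy) HN i Hi).
  unfold Nf. field. apply L_nz.
Qed.
Lemma eNx x y i : (i < 4)%nat -> dx (Nf phi) x y i =
  - (sin t / Lf phi x y) * dx phi x y i - (cos t / Lf phi x y) * dy phi x y i.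
Proof.
  intro Hi.
  assert (A : dot 4 (dx (Nf phi) x y) (dx phi x y) = - sin t) by (pose proof (rNXx x y); pose proof (aN x y); lra).
  assert (B : dot 4 (dx (Nf phi) x y) (dy phi x y) = - cos t).
  { pose proof (rNYx x y) as E. rewrite (dot_sym4 (Nf phi x y)), YxXy_dot, (dot_sym4 (dy (dx phi) x y)), bN in E. lra. }
  rewrite (span_eq _ _ _ _ (dx (Nf phi) x y) (- sin t) (- cos t) 0 0 (frame x y) A B (rNPx x y) (rNNx x y) i Hi).
  field. apply L_nz.
Qed.
Lemma eNy x y i : (i < 4)%nat -> dy (Nf phi) x y i =
  - (cos t / Lf phi x y) * dx phi x y i + (sin t / Lf phi x y) * dy phi x y i.
Proof.
  intro Hi.
  assert (A : dot 4 (dy (Nf phi) x y) (dx phi x y) = - cos t) by (pose proof (rNXy x y); pose proof (bN x y); lra).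
  assert (B : dot 4 (dy (Nf phi) x y) (dy phi x y) = sin t).
  { pose proof (rNYy x y). pose proof (rmin x y). pose proof (aN x y). lra. }
  rewrite (span_eq _ _ _ _ (dy (Nf phi) x y) (- cos t) (sin t) 0 0 (frame x y) A B (rNPy x y) (rNNy x y) i Hi).
  field. apply L_nz.
Qed.

Lemma s2nz : sqrt 2 <> 0.
Proof. pose proof (sqrt_lt_R0 2 ltac:(lra)). lra. Qed.

Definition U1f x y := U1 (dx phi x y) (dy phi x y) (phi x y) (Nf phi x y) (Lf phi x y).
Definition U2f x y := U2 (dx phi x y) (dy phi x y) (phi x y) (Nf phi x y).
Definition U3f x y := U3 (dx phi x y) (dy phi x y) (phi x y) (Nf phi x y).

Lemma wedge_scale2 c d a b k : wedge (scale c a) (scale d b) k = c * d * wedge a b k.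
Proof. unfold wedge, scale. destruct k as [|[|[|[|[|[|k]]]]]]; ring. Qed.

Lemma nu_rep : nu_plus phi = fun x y k => / sqrt 2 * U1f x y k.
Proof.
  apply functional_extensionality; intro x; apply functional_extensionality; intro y;
  apply functional_extensionality; intro k.
  unfold nu_plus. rewrite normal_eq. unfold scale at 1, vadd. rewrite wedge_scale2.
  unfold U1f, U1.
  assert (E1 : vnorm 4 (dx phi x y) = sqrt (Lf phi x y)) by reflexivity.
  assert (E2 : vnorm 4 (dy phi x y) = sqrt (Lf phi x y)).
  { unfold vnorm. destruct (frame x y) as (_ & _ & _ & B & _). rewrite B. reflexivity. }
  rewrite E1, E2. rewrite <- Rinv_mult, sqrt_sqrt by (left; apply L_pos). reflexivity.
Qed.

Lemma dLx x y : dxs (Lf phi) x y = 2 * vx x y * Lf phi x y.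
Proof.
  pose proof (dx_dot 4 (dx phi) (dx phi) x y vX vX) as E.
  change (dxs (Lf phi) x y) with (dxs (fun a b => dot 4 (dx phi a b) (dx phi a b)) x y).
  rewrite E, (dot_sym4 (dx phi x y)), dXxX. ring.
Qed.
Lemma dLy x y : dys (Lf phi) x y = 2 * vy x y * Lf phi x y.
Proof.
  pose proof (dy_dot 4 (dx phi) (dx phi) x y vX vX) as E.
  change (dys (Lf phi) x y) with (dys (fun a b => dot 4 (dx phi a b) (dx phi a b)) x y).
  rewrite E, (dot_sym4 (dx phi x y)), dXyX. ring.
Qed.

Ltac cinf3 := repeat first [ assumption | apply CLi | apply CL | apply vP | apply vX | apply vY | apply vN
   | apply vXx | apply vXy | apply vYx | apply vYy
   | apply Cinf_plus | apply Cinf_minus | apply Cinf_mult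
   | apply Cinf_opp | apply Cinf_const | apply vCinf_wedge ].

Lemma nux x y k : dx (nu_plus phi) x y k =
  / sqrt 2 * ((1 + cos t / Lf phi x y) * U2f x y k + (sin t / Lf phi x y) * U3f x y k).
Proof.
  rewrite nu_rep. unfold dx at 1. unfold U1f, U1.
  rewrite dxs_mult_pt, dxs_const, dxs_plus_pt, dxs_mult_pt, dxs_inv_pt, dLx, !dxs_wedge; cinf3;
    try apply L_nz.
  pose proof (ident_x (dx phi x y) (dy phi x y) (phi x y) (Nf phi x y) (dx (dx phi) x y) (dy (dx phi) x y)
    (dx (Nf phi) x y) (Lf phi x y) (vx x y) (vy x y) (sin t) (cos t) (L_nz x y)
    (eXx x y) (eXy x y) (eNx x y) k) as I.
  rewrite (wedge_ext_r (dx phi x y) (dx (dy phi) x y) (dy (dx phi) x y)) by (intros; symmetry; apply schw; auto).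
  unfold U2f, U3f. rewrite <- I. field. split; [apply L_nz|apply s2nz].
Qed.

Lemma nuy x y k : dy (nu_plus phi) x y k =
  / sqrt 2 * ((-1 + cos t / Lf phi x y) * U3f x y k + (- sin t / Lf phi x y) * U2f x y k).
Proof.
  rewrite nu_rep. unfold dy at 1. unfold U1f, U1.
  rewrite dys_mult_pt, dys_const, dys_plus_pt, dys_mult_pt, dys_inv_pt, dLy, !dys_wedge; cinf3;
    try apply L_nz.
  pose proof (ident_y (dx phi x y) (dy phi x y) (phi x y) (Nf phi x y) (dy (dx phi) x y) (dy (dy phi) x y)
    (dy (Nf phi) x y) (Lf phi x y) (vx x y) (vy x y) (sin t) (cos t) (L_nz x y)
    (eXy x y) (eYy x y) (eNy x y) k) as I.
  unfold U2f, U3f. rewrite <- I. field. split; [apply L_nz|apply s2nz].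
Qed.

Lemma lapnu x y k :
  dxs (fun a b => dx (nu_plus phi) a b k) x y + dys (fun a b => dy (nu_plus phi) a b k) x y
  = - (2 * Lf phi x y + 2 / Lf phi x y) * (/ sqrt 2 * U1f x y k).
Proof.
  rewrite (dxs_ext _ _ x y (fun a b => nux a b k)).
  rewrite (dys_ext _ _ x y (fun a b => nuy a b k)).
  unfold U1f, U2f, U3f, U2, U3, Rdiv.
  repeat first [ rewrite dxs_const | rewrite dys_const | rewrite dxs_mult_pt | rewrite dys_mult_pt
    | rewrite dxs_plus_pt | rewrite dys_plus_pt | rewrite dxs_minus_pt | rewrite dys_minus_pt
    | rewrite dxs_inv_pt | rewrite dys_inv_pt | rewrite dLx | rewrite dLy
    | rewrite dxs_wedge | rewrite dys_wedge ]; cinf3; try apply L_nz.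
  rewrite !(wedge_ext_l (dx (dy phi) x y) (dy (dx phi) x y)) by (intros; symmetry; apply schw; auto).
  pose proof (ident_lap0 (dx phi x y) (dy phi x y) (phi x y) (Nf phi x y) (dx (dx phi) x y) (dy (dx phi) x y)
    (dy (dy phi) x y) (dx (Nf phi) x y) (dy (Nf phi) x y) (Lf phi x y) (vx x y) (vy x y) (sin t) (cos t) (L_nz x y)
    (eXx x y) (eXy x y) (eYy x y) (eNx x y) (eNy x y) k) as I.
  assert (SC : sin t * sin t + cos t * cos t = 1) by (pose proof (sin2_cos2 t); unfold Rsqr in *; lra).
  rewrite SC in I.
  unfold U1, U2, U3 in I.
  match type of I with ?l = ?r =>
    transitivity (/ sqrt 2 * l); [|rewrite I; unfold U1; field; repeat split; try apply L_nz; try apply s2nz] end.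
  field. split; [apply L_nz|apply s2nz].
Qed.

Lemma dot6_ext a a' b b' : (forall k, (k < 6)%nat -> a k = a' k) -> (forall k, (k < 6)%nat -> b k = b' k) ->
  dot 6 a b = dot 6 a' b'.
Proof.
  intros A B. rewrite !dot6E.
  rewrite (A 0%nat), (A 1%nat), (A 2%nat), (A 3%nat), (A 4%nat), (A 5%nat),
    (B 0%nat), (B 1%nat), (B 2%nat), (B 3%nat), (B 4%nat), (B 5%nat) by lia. reflexivity.
Qed.

Lemma phik x y k : (k < 6)%nat -> PhiMap t phi x y k = nu_plus phi x y k.
Proof.
  intro Hk. unfold PhiMap. apply Nat.ltb_lt in Hk. rewrite Hk. reflexivity.
Qed.
Lemma phi6 x y : PhiMap t phi x y 6%nat = 2 * (x * sin (t / 2) + y * cos (t / 2)).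
Proof. reflexivity. Qed.

Lemma dxPhi x y k : (k < 6)%nat -> dx (PhiMap t phi) x y k = dx (nu_plus phi) x y k.
Proof. intro Hk. unfold dx. apply dxs_ext. intros; apply phik; auto. Qed.
Lemma dyPhi x y k : (k < 6)%nat -> dy (PhiMap t phi) x y k = dy (nu_plus phi) x y k.
Proof. intro Hk. unfold dy. apply dys_ext. intros; apply phik; auto. Qed.
Lemma dxPhi6 x y : dx (PhiMap t phi) x y 6%nat = 2 * sin (t / 2).
Proof.
  unfold dx, dxs. rewrite (Derive_ext _ (fun s => 2 * (s * sin (t / 2) + y * cos (t / 2)))) by (intro; apply phi6).
  apply is_derive_unique. auto_derive; auto. ring.
Qed.
Lemma dyPhi6 x y : dy (PhiMap t phi) x y 6%nat = 2 * cos (t / 2).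
Proof.
  unfold dy, dys. rewrite (Derive_ext _ (fun s => 2 * (x * sin (t / 2) + s * cos (t / 2)))) by (intro; apply phi6).
  apply is_derive_unique. auto_derive; auto. ring.
Qed.

Lemma lapPhi x y k : (k < 6)%nat ->
  lap (PhiMap t phi) x y k = - (2 * Lf phi x y + 2 / Lf phi x y) * (/ sqrt 2 * U1f x y k).
Proof.
  intro Hk. unfold lap, vadd. rewrite <- lapnu. unfold dx at 1, dy at 1. f_equal.
  - apply dxs_ext. intros; apply dxPhi; auto.
  - apply dys_ext. intros; apply dyPhi; auto.
Qed.
Lemma lapPhi6 x y : lap (PhiMap t phi) x y 6%nat = 0.
Proof.
  unfold lap, vadd, dx at 1, dy at 1.
  rewrite (dxs_const_fun _ (2 * sin (t / 2))) by (intros; apply dxPhi6).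
  rewrite (dys_const_fun _ (2 * cos (t / 2))) by (intros; apply dyPhi6). ring.
Qed.

Lemma gramf x y :
  dot 6 (U1f x y) (U1f x y) = 2 /\
  dot 6 (U2f x y) (U2f x y) = 2 * Lf phi x y /\
  dot 6 (U3f x y) (U3f x y) = 2 * Lf phi x y /\
  dot 6 (U2f x y) (U3f x y) = 0 /\
  dot 6 (U1f x y) (U2f x y) = 0 /\
  dot 6 (U1f x y) (U3f x y) = 0.
Proof. exact (gram_U _ _ _ _ (frame x y)). Qed.

Lemma isoxx x y : dot 6 (dx (PhiMap t phi) x y) (dx (PhiMap t phi) x y) =
   Lf phi x y * ((1 + cos t / Lf phi x y) ^ 2 + (sin t / Lf phi x y) ^ 2).
Proof.
  rewrite (dot6_ext _ (fun k => / sqrt 2 * ((1 + cos t / Lf phi x y) * U2f x y k + (sin t / Lf phi x y) * U3f x y k))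
     _ (fun k => / sqrt 2 * ((1 + cos t / Lf phi x y) * U2f x y k + (sin t / Lf phi x y) * U3f x y k)))
   by (intros; rewrite dxPhi by auto; apply nux).
  rewrite d6_scal_l, d6_scal_r, dot6_lin.
  destruct (gramf x y) as (G1 & G2 & G3 & G4 & G5 & G6).
  rewrite (dot6_sym (U3f x y) (U2f x y)).
  rewrite G2, G3, G4.
  rewrite <- Rmult_assoc, <- Rinv_mult, sqrt_sqrt by lra. field. apply L_nz.
Qed.

Lemma isoyy x y : dot 6 (dy (PhiMap t phi) x y) (dy (PhiMap t phi) x y) =
   Lf phi x y * ((-1 + cos t / Lf phi x y) ^ 2 + (- sin t / Lf phi x y) ^ 2).
Proof.
  rewrite (dot6_ext _ (fun k => / sqrt 2 * ((-1 + cos t / Lf phi x y) * U3f x y k + (- sin t / Lf phi x y) * U2f x y k))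
     _ (fun k => / sqrt 2 * ((-1 + cos t / Lf phi x y) * U3f x y k + (- sin t / Lf phi x y) * U2f x y k)))
   by (intros; rewrite dyPhi by auto; apply nuy).
  rewrite d6_scal_l, d6_scal_r, dot6_lin.
  destruct (gramf x y) as (G1 & G2 & G3 & G4 & G5 & G6).
  rewrite (dot6_sym (U3f x y) (U2f x y)).
  rewrite G2, G3, G4.
  rewrite <- Rmult_assoc, <- Rinv_mult, sqrt_sqrt by lra. field. apply L_nz.
Qed.

Lemma isoxy x y : dot 6 (dx (PhiMap t phi) x y) (dy (PhiMap t phi) x y) =
   Lf phi x y * ((1 + cos t / Lf phi x y) * (- sin t / Lf phi x y) + (sin t / Lf phi x y) * (-1 + cos t / Lf phi x y)).
Proof.
  rewrite (dot6_ext _ (fun k => / sqrt 2 * ((1 + cos t / Lf phi x y) * U2f x y k + (sin t / Lf phi x y) * U3f x y k))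
     _ (fun k => / sqrt 2 * ((-1 + cos t / Lf phi x y) * U3f x y k + (- sin t / Lf phi x y) * U2f x y k)))
   by (intros; first [rewrite dxPhi by auto; apply nux | rewrite dyPhi by auto; apply nuy]).
  rewrite d6_scal_l, d6_scal_r, dot6_lin.
  destruct (gramf x y) as (G1 & G2 & G3 & G4 & G5 & G6).
  rewrite (dot6_sym (U3f x y) (U2f x y)).
  rewrite G2, G3, G4.
  rewrite <- Rmult_assoc, <- Rinv_mult, sqrt_sqrt by lra. field. apply L_nz.
Qed.

Lemma SC t0 : sin t0 * sin t0 + cos t0 * cos t0 = 1.
Proof. pose proof (sin2_cos2 t0). unfold Rsqr in *. lra. Qed.

Lemma cosh_L x y : 4 * cosh (v x y) ^ 2 = Lf phi x y + 2 + / Lf phi x y.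
Proof.
  rewrite L_exp. unfold cosh. replace (2 * v x y) with (v x y + v x y) by ring.
  rewrite exp_plus, exp_Ropp. pose proof (exp_pos (v x y)). field. lra.
Qed.

Lemma half_trig : cos t = 1 - 2 * sin (t / 2) * sin (t / 2) /\
   cos t = 2 * cos (t / 2) * cos (t / 2) - 1 /\ sin t = 2 * sin (t / 2) * cos (t / 2).
Proof.
  pose proof (cos_2a_sin (t / 2)) as A. pose proof (cos_2a_cos (t / 2)) as B.
  pose proof (sin_2a (t / 2)) as C.
  replace (2 * (t / 2)) with t in A, B, C by field.
  repeat split; lra.
Qed.

Lemma iso7 : isometric 7 (PhiMap t phi) (fun x y => 4 * cosh (v x y) ^ 2).
Proof.
  intros x y. rewrite !dot7E, isoxx, isoyy, isoxy, dxPhi6, dyPhi6, cosh_L.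
  destruct half_trig as (T1 & T2 & T3). pose proof (L_nz x y) as HL.
  pose proof (SC t) as HSC.
  repeat split.
  - replace (Lf phi x y * ((1 + cos t / Lf phi x y) ^ 2 + (sin t / Lf phi x y) ^ 2))
      with (Lf phi x y + 2 * cos t + (sin t * sin t + cos t * cos t) / Lf phi x y) by (field; auto).
    rewrite HSC, T1. field; auto.
  - replace (Lf phi x y * ((-1 + cos t / Lf phi x y) ^ 2 + (- sin t / Lf phi x y) ^ 2))
      with (Lf phi x y - 2 * cos t + (sin t * sin t + cos t * cos t) / Lf phi x y) by (field; auto).
    rewrite HSC, T2. field; auto.
  - rewrite T3. field; auto.
Qed.

Lemma hopf7 x y : hopfS2R (PhiMap t phi) x y = (cos t, sin t).
Proof.
  unfold hopfS2R, cdot, dz. simpl.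
  rewrite !dot_scale_l, !dot_scale_r.
  rewrite (dot6_sym (dy (PhiMap t phi) x y) (dx (PhiMap t phi) x y)), isoxx, isoyy, isoxy.
  pose proof (L_nz x y) as HL. pose proof (SC t) as HSC.
  f_equal.
  - replace (/ 2 * (/ 2 * (Lf phi x y * ((1 + cos t / Lf phi x y) ^ 2 + (sin t / Lf phi x y) ^ 2))) -
       - / 2 * (- / 2 * (Lf phi x y * ((-1 + cos t / Lf phi x y) ^ 2 + (- sin t / Lf phi x y) ^ 2))))
     with (cos t) by (field; auto). reflexivity.
  - field; auto.
Qed.

Lemma phiU x y k : (k < 6)%nat -> PhiMap t phi x y k = / sqrt 2 * U1f x y k.
Proof. intro Hk. rewrite phik by auto. rewrite nu_rep. reflexivity. Qed.

Lemma U1sd x y k : (k < 6)%nat -> hodge (U1f x y) k = U1f x y k.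
Proof.
  intro Hk. pose proof (fun j Hj => PN_hodge _ _ _ _ j (frame x y) Hj) as E.
  unfold U1f, U1 at 2. fold (Nf phi x y) in E.
  destruct k as [|[|[|[|[|[|k]]]]]]; try lia; unfold hodge at 1; unfold U1;
  rewrite !E by lia; unfold hodge; ring.
Qed.

Lemma sd7 x y : self_dual (PhiMap t phi x y) /\ dot 6 (PhiMap t phi x y) (PhiMap t phi x y) = 1.
Proof.
  split.
  - intros k Hk.
    assert (HE : forall a b : vec, (forall j, (j < 6)%nat -> a j = b j) -> hodge a k = hodge b k).
    { intros a b E. destruct k as [|[|[|[|[|[|k]]]]]]; unfold hodge; try lia; rewrite E by lia; reflexivity. }
    rewrite (HE _ (fun j => / sqrt 2 * U1f x y j)) by (intros; apply phiU; auto).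
    rewrite phiU by auto. rewrite <- (U1sd x y k Hk).
    destruct k as [|[|[|[|[|[|k]]]]]]; unfold hodge; ring.
  - rewrite (dot6_ext _ (fun k => / sqrt 2 * U1f x y k) _ (fun k => / sqrt 2 * U1f x y k))
      by (intros; apply phiU; auto).
    rewrite d6_scal_l, d6_scal_r. destruct (gramf x y) as [G _]. rewrite G.
    rewrite <- Rmult_assoc, <- Rinv_mult, sqrt_sqrt by lra. field.
Qed.

Lemma min7 : minimal_S2R (PhiMap t phi).
Proof.
  intros x y w _ Hw.
  rewrite dot7E, lapPhi6.
  rewrite (dot6_ext _ (fun k => - (2 * Lf phi x y + 2 / Lf phi x y) * (/ sqrt 2 * U1f x y k)) w w)
    by (intros; first [reflexivity | apply lapPhi; auto]).
  rewrite d6_scal_l.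
  rewrite (dot6_ext w w (PhiMap t phi x y) (fun k => / sqrt 2 * U1f x y k)) in Hw
    by (intros; first [reflexivity | apply phiU; auto]).
  rewrite dot6_sym in Hw. rewrite Hw. ring.
Qed.

Lemma smooth7 : smooth 7 (PhiMap t phi).
Proof.
  apply smooth_of_vCinf. intros i Hi.
  destruct (Nat.lt_ge_cases i 6) as [Hl|Hg].
  - replace (fun x y => PhiMap t phi x y i) with (fun x y => / sqrt 2 * U1f x y i).
    + unfold U1f, U1. cinf3.
    + apply functional_extensionality; intro x; apply functional_extensionality; intro y.
      symmetry; apply phiU; auto.
  - assert (i = 6%nat) by lia. subst i.
    replace (fun x y => PhiMap t phi x y 6%nat) with (fun x y : R => 2 * (x * sin (t / 2) + y * cos (t / 2))).
    + apply Cinf_mult; [apply Cinf_const|]. apply Cinf_plus; apply Cinf_mult;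
        first [apply Cinf_fst | apply Cinf_snd | apply Cinf_const].
    + apply functional_extensionality; intro x; apply functional_extensionality; intro y.
      symmetry; apply phi6.
Qed.
End M.

Theorem corollary5p5 (v : R -> R -> R) (phi : R -> R -> R -> vec) :
  smooth_scalar v ->
  (* v_{z zbar} + sinh(2v)/2 = 0, with v_{z zbar} = (v_xx + v_yy)/4 *)
  (forall x y, / 4 * laps v x y + / 2 * sinh (2 * v x y) = 0) ->
  (forall t, isometric_minimal_S3 (phi t) (fun x y => exp (2 * v x y))) ->
  (forall t x y, hopfS3 (phi t) x y = Cmult (0, / 2) (cos t, sin t)) ->
  forall t,
    isometric_minimal_S2R (PhiMap t (phi t)) (fun x y => 4 * (cosh (v x y)) ^ 2) /\
    (forall x y, hopfS2R (PhiMap t (phi t)) x y = (cos t, sin t)).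
Proof.
  intros _ _ Hmin Hh t.
  assert (H : Hyp (phi t) v t).
  { destruct (Hmin t) as (A & B & C & D). exact (conj A (conj B (conj C (conj D (Hh t))))). }
  split.
  - split; [apply (smooth7 _ _ _ H)|]. split; [apply (sd7 _ _ _ H)|].
    split; [apply (iso7 _ _ _ H)|apply (min7 _ _ _ H)].
  - apply (hopf7 _ _ _ H).
Qed.
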